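(* Let $M, N$ be $\lambda$-terms with $M \twoheadrightarrow_\beta N$. Then $M$ and $N$ have the same Böhm tree, and $\mathrm{cBT}(M) \ge \mathrm{cBT}(N)$; i.e. at every position either both clocked Böhm trees are unannotated, or both are annotated, with natural numbers $k_1$ (in $\mathrm{cBT}(M)$) and $k_2$ (in $\mathrm{cBT}(N)$) satisfying $k_1 \ge k_2$. (Clocks are accelerated under reduction and slowed down under expansion.)
   Context: Untyped $\lambda$-calculus with $\beta$-reduction; $\twoheadrightarrow_\beta$ is its reflexive–transitive closure. A head reduction step is a step $\lambda x_1\ldots x_n.(\lambda y.P)Q Q_1\ldots Q_m \to \lambda x_1\ldots x_n.P[y:=Q] Q_1\ldots Q_m$ ($n,m\ge0$); a head normal form (hnf) is a term $\lambda x_1\ldots x_n.\,y M_1\ldots M_m$; a term has an hnf if it reduces to one. The clocked Böhm tree $\mathrm{cBT}(t)$ is the (possibly infinite) annotated term defined coinductively: if $t$ has no hnf, $\mathrm{cBT}(t) = \bot$ (unannotated); otherwise there is a head reduction of some length $k$ from $t$ to an hnf $\lambda x_1\ldots x_n.\,y M_1\ldots M_m$, and $\mathrm{cBT}(t)$ is the term $\lambda x_1\ldots x_n.\,y\,\mathrm{cBT}(M_1)\ldots\mathrm{cBT}(M_m)$ whose root is annotated with $k$. The Böhm tree $\mathrm{BT}(t)$ is obtained from $\mathrm{cBT}(t)$ by erasing all annotations. Positions in such trees are finite sequences over $\{0,1,2\}$ (0: body of an abstraction, 1: function part of an application, 2: argument part). *)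

(* Defs.v *)
From Stdlib Require Import Arith List Relations.
Import ListNotations.

Inductive term : Type :=
| Var : nat -> term
| Lam : term -> term
| App : term -> term -> term.

Fixpoint lift (d k : nat) (t : term) : term :=
  match t with
  | Var n => if n <? k then Var n else Var (n + d)
  | Lam b => Lam (lift d (S k) b)
  | App f a => App (lift d k f) (lift d k a)
  end.

Fixpoint subst (u : term) (k : nat) (t : term) : term :=
  match t with
  | Var n => if n <? k then Var n
             else if n =? k then lift k 0 u
             else Var (n - 1)
  | Lam b => Lam (subst u (S k) b)
  | App f a => App (subst u k f) (subst u k a)
  end.

Inductive beta : term -> term -> Prop :=
| beta_redex : forall P Q, beta (App (Lam P) Q) (subst Q 0 P)
| beta_lam : forall t t', beta t t' -> beta (Lam t) (Lam t')
| beta_appl : forall f f' a, beta f f' -> beta (App f a) (App f' a)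
| beta_appr : forall f a a', beta a a' -> beta (App f a) (App f a').

Definition betas : term -> term -> Prop := clos_refl_trans term beta.

Definition isLam (t : term) : Prop :=
  match t with Lam _ => True | _ => False end.

(* head reduction step:
   \x1..xn.(\y.P) Q Q1..Qm -> \x1..xn. P[y:=Q] Q1..Qm *)
Inductive hred : term -> term -> Prop :=
| hred_redex : forall P Q, hred (App (Lam P) Q) (subst Q 0 P)
| hred_app : forall f f' a, ~ isLam f -> hred f f' -> hred (App f a) (App f' a)
| hred_lam : forall t t', hred t t' -> hred (Lam t) (Lam t').

Inductive hreds : nat -> term -> term -> Prop :=
| hreds_refl : forall t, hreds 0 t t
| hreds_step : forall k t u v, hred t u -> hreds k u v -> hreds (S k) t v.

Inductive neutral : term -> Prop :=
| neutral_var : forall n, neutral (Var n)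
| neutral_app : forall f a, neutral f -> neutral (App f a).

Inductive is_hnf : term -> Prop :=
| hnf_neutral : forall t, neutral t -> is_hnf t
| hnf_lam : forall t, is_hnf t -> is_hnf (Lam t).

Definition has_hnf (t : term) : Prop := exists h, betas t h /\ is_hnf h.

(* positions: 0 = body of abstraction, 1 = function part, 2 = argument part *)
Inductive dir : Type := D0 | D1 | D2.
Definition position := list dir.

Inductive label : Type :=
| LBot : label
| LLam : label
| LApp : label
| LVar : nat -> label.

(* cbt_at t p l a : in cBT(t), position p exists, carries label l and
   annotation a (None = unannotated, Some k = clock k).
   skel_at h p l a : same, walking through the top part of an hnf h;
   arguments M_i of the hnf are continued with cBT(M_i). *)
Inductive cbt_at : term -> position -> label -> option nat -> Prop :=
| cbt_bot : forall t, ~ has_hnf t -> cbt_at t [] LBot None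
| cbt_root : forall t k h l a,
    hreds k t h -> is_hnf h -> skel_at h [] l a -> cbt_at t [] l (Some k)
| cbt_sub : forall t k h d p l a,
    hreds k t h -> is_hnf h -> skel_at h (d :: p) l a -> cbt_at t (d :: p) l a
with skel_at : term -> position -> label -> option nat -> Prop :=
| skel_var : forall n, skel_at (Var n) [] (LVar n) None
| skel_lam : forall b, skel_at (Lam b) [] LLam None
| skel_lam_body : forall b p l a, skel_at b p l a -> skel_at (Lam b) (D0 :: p) l a
| skel_app : forall f u, skel_at (App f u) [] LApp None
| skel_app_fun : forall f u p l a, skel_at f p l a -> skel_at (App f u) (D1 :: p) l a
| skel_app_arg : forall f u p l a, cbt_at u p l a -> skel_at (App f u) (D2 :: p) l a.

Definition ann_ge (a1 a2 : option nat) : Prop :=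
  match a1, a2 with
  | None, None => True
  | Some k1, Some k2 => k2 <= k1
  | _, _ => False
  end.

(* Main.v *)
Require Import Defs.
From Stdlib Require Import Arith List Relations Lia.
Import ListNotations.

Ltac cmp1 := match goal with
 | |- context [?a <? ?b] => destruct (Nat.ltb_spec a b)
 | |- context [?a =? ?b] => destruct (Nat.eqb_spec a b)
 end.
Ltac vcase := repeat (simpl; cmp1); simpl; try (f_equal; lia); try lia.

Lemma lift0 : forall t k, lift 0 k t = t.
Proof. induction t; intros; simpl; [vcase|f_equal; auto|f_equal; auto]. Qed.

Lemma lift_merge : forall t i k n m, i <= k <= i + n -> lift m k (lift n i t) = lift (m+n) i t.
Proof. induction t; intros; simpl; [vcase| |].
 - f_equal; apply IHt; lia.
 - f_equal; auto. Qed.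

Lemma lift_perm : forall t i k m n, i <= k -> lift m i (lift n k t) = lift n (m + k) (lift m i t).
Proof. induction t; intros; simpl; [vcase| |].
 - f_equal. rewrite IHt by lia. f_equal; lia.
 - f_equal; auto. Qed.

Lemma subst_lift_cancel : forall t u i j n, i <= j <= i + n -> subst u j (lift (S n) i t) = lift n i t.
Proof. induction t; intros; simpl; [vcase| |].
 - f_equal; apply IHt; lia.
 - f_equal; auto. Qed.

Lemma subst_lift_perm : forall t N i k n, i <= k -> subst N (n + k) (lift n i t) = lift n i (subst N k t).
Proof. induction t; intros; simpl.
 - repeat (simpl; cmp1); simpl; try (f_equal; lia); try lia.
   all: subst; rewrite lift_merge by lia; f_equal; lia.
 - f_equal. rewrite <- IHt by lia. f_equal; lia.
 - f_equal; auto. Qed.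

Lemma lift_subst : forall t u j k d, j <= k -> lift d k (subst u j t) = subst (lift d (k - j) u) j (lift d (S k) t).
Proof. induction t; intros; simpl.
 - repeat (simpl; cmp1); simpl; try (f_equal; lia); try lia.
   all: subst n; rewrite (lift_perm u 0 (k-j) j d) by lia; f_equal; lia.
 - f_equal. rewrite IHt by lia. reflexivity.
 - f_equal; auto. Qed.

Lemma subst_subst : forall t N Q j k, j <= k -> subst N k (subst Q j t) = subst (subst N (k-j) Q) j (subst N (S k) t).
Proof. induction t; intros; simpl.
 - repeat (simpl; cmp1); simpl; try (f_equal; lia); try lia.
   all: try (subst n; replace k with (j + (k - j)) at 1 by lia; apply (subst_lift_perm Q N 0 (k-j) j); lia).
   all: try (subst; rewrite subst_lift_cancel by lia; reflexivity).
 - f_equal. rewrite IHt by lia. reflexivity.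
 - f_equal; auto. Qed.

Lemma betas_lam : forall a b, betas a b -> betas (Lam a) (Lam b).
Proof. intros a b H; induction H; [constructor; constructor; auto|apply rt_refl|eapply rt_trans; eauto]. Qed.
Lemma betas_appl : forall a b u, betas a b -> betas (App a u) (App b u).
Proof. intros a b u H; induction H; [constructor; constructor; auto|apply rt_refl|eapply rt_trans; eauto]. Qed.
Lemma betas_appr : forall a b u, betas a b -> betas (App u a) (App u b).
Proof. intros a b u H; induction H; [constructor; constructor; auto|apply rt_refl|eapply rt_trans; eauto]. Qed.
Lemma betas_refl : forall t, betas t t. Proof. intros; apply rt_refl. Qed.
Lemma betas_trans : forall a b c, betas a b -> betas b c -> betas a c. Proof. intros; eapply rt_trans; eauto. Qed.

Inductive par : term -> term -> Prop :=
| par_var : forall n, par (Var n) (Var n)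
| par_lam : forall a b, par a b -> par (Lam a) (Lam b)
| par_app : forall f g u v, par f g -> par u v -> par (App f u) (App g v)
| par_beta : forall P P' Q Q', par P P' -> par Q Q' -> par (App (Lam P) Q) (subst Q' 0 P').

Lemma par_refl : forall t, par t t.
Proof. induction t; constructor; auto. Qed.

Lemma beta_par : forall a b, beta a b -> par a b.
Proof. intros a b H; induction H; constructor; auto using par_refl. Qed.

Lemma par_betas : forall a b, par a b -> betas a b.
Proof. intros a b H; induction H.
 - apply betas_refl.
 - apply betas_lam; auto.
 - eapply betas_trans; [apply betas_appl; eauto| apply betas_appr; eauto].
 - eapply betas_trans; [apply betas_appl; apply betas_lam; eauto|].
   eapply betas_trans; [apply betas_appr; eauto|]. constructor; constructor. Qed.

Lemma par_lift : forall a b, par a b -> forall d k, par (lift d k a) (lift d k b).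
Proof. intros a b H; induction H; intros; simpl.
 - apply par_refl.
 - constructor; auto.
 - constructor; auto.
 - rewrite lift_subst by lia. replace (k - 0) with k by lia. constructor; auto. Qed.

Lemma par_subst : forall a b, par a b -> forall N N', par N N' -> forall k, par (subst N k a) (subst N' k b).
Proof. intros a b H; induction H; intros; simpl.
 - repeat cmp1; try apply par_refl. apply par_lift; auto.
 - constructor; auto.
 - constructor; auto.
 - rewrite subst_subst by lia. replace (k - 0) with k by lia. constructor; auto. Qed.

Inductive wh : term -> term -> Prop :=
| wh_redex : forall P Q, wh (App (Lam P) Q) (subst Q 0 P)
| wh_app : forall f f' a, wh f f' -> wh (App f a) (App f' a).

Inductive std : term -> term -> Prop :=
| std_var : forall n, std (Var n) (Var n)
| std_lam : forall a b, std a b -> std (Lam a) (Lam b)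
| std_app : forall f g u v, std f g -> std u v -> std (App f u) (App g v)
| std_wh : forall M M' N, wh M M' -> std M' N -> std M N.

Lemma std_refl : forall t, std t t.
Proof. induction t; constructor; auto. Qed.

Lemma wh_lift : forall a b, wh a b -> forall d k, wh (lift d k a) (lift d k b).
Proof. intros a b H; induction H; intros; simpl.
 - rewrite lift_subst by lia. replace (k - 0) with k by lia. constructor.
 - constructor; auto. Qed.

Lemma wh_subst : forall a b, wh a b -> forall N k, wh (subst N k a) (subst N k b).
Proof. intros a b H; induction H; intros; simpl.
 - rewrite subst_subst by lia. replace (k - 0) with k by lia. constructor.
 - constructor; auto. Qed.

Lemma std_lift : forall a b, std a b -> forall d k, std (lift d k a) (lift d k b).
Proof. intros a b H; induction H; intros; simpl.
 - apply std_refl.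
 - constructor; auto.
 - constructor; auto.
 - eapply std_wh; [apply wh_lift; eauto| auto]. Qed.

Lemma std_subst : forall a b, std a b -> forall N N', std N N' -> forall k, std (subst N k a) (subst N' k b).
Proof. intros a b H; induction H; intros; simpl.
 - repeat cmp1; try apply std_refl. apply std_lift; auto.
 - constructor; auto.
 - constructor; auto.
 - eapply std_wh; [apply wh_subst; eauto| auto]. Qed.

Lemma whs_std : forall M M', clos_refl_trans_1n term wh M M' -> forall N, std M' N -> std M N.
Proof. intros M M' H; induction H; intros; auto. eapply std_wh; eauto. Qed.

Lemma whs_app : forall f f' u, clos_refl_trans_1n term wh f f' ->
  clos_refl_trans_1n term wh (App f u) (App f' u).
Proof. intros f f' u H; induction H; [constructor|]. econstructor; [apply wh_app; eauto|auto]. Qed.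

Lemma std_lam_inv : forall M L, std M L -> forall P, L = Lam P ->
  exists P0, clos_refl_trans_1n term wh M (Lam P0) /\ std P0 P.
Proof. intros M L H; induction H; intros P0 E; try discriminate.
 - inversion E; subst. exists a; split; [constructor|auto].
 - destruct (IHstd _ E) as [P1 [H1 H2]]. exists P1; split; auto. econstructor; eauto. Qed.

Lemma std_beta : forall M N, std M N -> forall N', beta N N' -> std M N'.
Proof. intros M N H; induction H; intros N' B.
 - inversion B.
 - inversion B; subst. constructor; auto.
 - inversion B; subst.
   + destruct (std_lam_inv _ _ H _ eq_refl) as [P0 [H1 H2]].
     eapply whs_std. apply whs_app; eauto.
     eapply std_wh; [constructor|]. apply std_subst; auto.
   + constructor; auto.
   + constructor; auto.
 - eapply std_wh; eauto. Qed.

Lemma betas_std : forall M N, betas M N -> std M N.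
Proof. intros M N H. apply clos_rt_rtn1 in H. induction H; [apply std_refl|]. eapply std_beta; eauto. Qed.

Lemma hred_beta : forall a b, hred a b -> beta a b.
Proof. intros a b H; induction H; constructor; auto. Qed.
Lemma hreds_betas : forall k a b, hreds k a b -> betas a b.
Proof. intros k a b H; induction H; [apply betas_refl|]. eapply betas_trans; [constructor; apply hred_beta; eauto|auto]. Qed.

Lemma hred_det : forall a b, hred a b -> forall c, hred a c -> b = c.
Proof. intros a b H; induction H; intros c H'; inversion H'; subst; auto.
 - simpl in *; tauto.
 - simpl in *; tauto.
 - f_equal; auto.
 - f_equal; auto. Qed.

Lemma neutral_nored : forall t, neutral t -> forall u, ~ hred t u.
Proof. intros t H; induction H; intros u R; inversion R; subst.
 - inversion H.
 - eapply IHneutral; eauto. Qed.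

Lemma hnf_nored : forall t, is_hnf t -> forall u, ~ hred t u.
Proof. intros t H; induction H; intros u R.
 - eapply neutral_nored; eauto.
 - inversion R; subst. eapply IHis_hnf; eauto. Qed.

Lemma hreds_uniq : forall k t h, hreds k t h -> is_hnf h -> forall k' h', hreds k' t h' -> is_hnf h' -> k = k' /\ h = h'.
Proof. intros k t h H; induction H; intros Hh k' h' H' Hh'.
 - inversion H'; subst; auto. exfalso; eapply (hnf_nored _ Hh); eauto.
 - inversion H'; subst.
   + exfalso; eapply (hnf_nored _ Hh'); eauto.
   + assert (u = u0) by (eapply hred_det; eauto). subst.
     destruct (IHhreds Hh _ _ H2 Hh'); subst; auto. Qed.

Lemma hreds_lam : forall k a b, hreds k a b -> hreds k (Lam a) (Lam b).
Proof. intros k a b H; induction H; econstructor; eauto. constructor; auto. Qed.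

Lemma hred_isLam : forall a b, hred a b -> isLam a -> isLam b.
Proof. intros a b H; destruct H; simpl; tauto. Qed.
Lemma hreds_isLam : forall k a b, hreds k a b -> isLam a -> isLam b.
Proof. intros k a b H; induction H; auto. intros; apply IHhreds; eapply hred_isLam; eauto. Qed.

Lemma hreds_app : forall k f h u, hreds k f h -> ~ isLam h -> hreds k (App f u) (App h u).
Proof. intros k f h u H; induction H; intros NL; [constructor|].
 econstructor; [| apply IHhreds; auto]. constructor; auto.
 intro L. apply NL. eapply hreds_isLam; eauto. eapply hred_isLam; eauto. Qed.

Lemma wh_hred : forall a b, wh a b -> hred a b.
Proof. intros a b H; induction H; constructor; auto. inversion H; simpl; tauto. Qed.

Lemma std_hn : forall M N, std M N ->
  (neutral N -> exists k h, hreds k M h /\ neutral h) /\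
  (is_hnf N -> exists k h, hreds k M h /\ is_hnf h).
Proof. intros M N H; induction H.
 - split; intros; exists 0, (Var n); split; constructor; constructor.
 - split; intros Hn; [inversion Hn|].
   inversion Hn; subst; [inversion H0|].
   destruct (proj2 IHstd H1) as [k [h [H2 H3]]]. exists k, (Lam h); split; [apply hreds_lam; auto|apply hnf_lam; auto].
 - assert (neutral (App g v) -> exists k h, hreds k (App f u) h /\ neutral h).
   { intros Hn; inversion Hn as [|? ? Hg]; subst. destruct (proj1 IHstd1 Hg) as [k [h [H4 H5]]].
     exists k, (App h u); split; [apply hreds_app; auto|constructor; auto].
     inversion H5; simpl; tauto. }
   split; auto. intros Hn; inversion Hn; subst.
   destruct (H1 H2) as [k [h [? ?]]]. exists k, h; split; auto; constructor; auto.
 - destruct IHstd as [I1 I2]. split; intros Hn.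
   + destruct (I1 Hn) as [k [h [? ?]]]. exists (S k), h; split; auto. econstructor; eauto. apply wh_hred; auto.
   + destruct (I2 Hn) as [k [h [? ?]]]. exists (S k), h; split; auto. econstructor; eauto. apply wh_hred; auto. Qed.

Lemma head_norm : forall M H, betas M H -> is_hnf H -> exists k h, hreds k M h /\ is_hnf h.
Proof. intros. apply (proj2 (std_hn _ _ (betas_std _ _ H0))); auto. Qed.

Lemma par_hred : forall M M1, hred M M1 -> forall N, par M N ->
  exists N1, par M1 N1 /\ (N1 = N \/ (hred N N1 /\ (isLam N -> isLam M))).
Proof. intros M M1 H; induction H; intros N HP.
 - inversion HP; subst.
   + inversion H1; subst. exists (subst v 0 b); split.
     * apply par_subst; auto.
     * right; split; [constructor|simpl; tauto].
   + exists (subst Q' 0 P'); split; auto. apply par_subst; auto.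
 - inversion HP; subst.
   + destruct (IHhred _ H3) as [g1 [Hp [E|[Hr Hl]]]].
     * exists (App g1 v); split; [constructor; auto|left; rewrite E; auto].
     * exists (App g1 v); split; [constructor; auto|right; split; [|simpl; tauto]].
       constructor; auto.
   + exfalso; apply H; simpl; auto.
 - inversion HP; subst. destruct (IHhred _ H1) as [g1 [Hp [E|[Hr Hl]]]].
   + exists (Lam g1); split; [constructor; auto|left; rewrite E; auto].
   + exists (Lam g1); split; [constructor; auto|right; split; [constructor; auto|simpl; auto]]. Qed.

Lemma par_neutral : forall H, neutral H -> forall N, par H N -> neutral N.
Proof. intros H Hn; induction Hn; intros N P; inversion P; subst.
 - constructor.
 - constructor; auto.
 - inversion Hn. Qed.

Lemma par_hnf : forall H, is_hnf H -> forall N, par H N -> is_hnf N.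
Proof. intros H Hn; induction Hn; intros N P.
 - constructor; eapply par_neutral; eauto.
 - inversion P; subst. apply hnf_lam; auto. Qed.

Inductive skrel : term -> term -> Prop :=
| sk_var : forall n, skrel (Var n) (Var n)
| sk_lam : forall a b, skrel a b -> skrel (Lam a) (Lam b)
| sk_app : forall f g u v, skrel f g -> betas u v -> skrel (App f u) (App g v).

Lemma skrel_refl : forall t, skrel t t.
Proof. induction t; constructor; auto using betas_refl. Qed.

Lemma skrel_trans : forall a b, skrel a b -> forall c, skrel b c -> skrel a c.
Proof. intros a b H; induction H; intros c H'; inversion H'; subst; constructor; eauto using betas_trans. Qed.

Lemma par_neutral_sk : forall H, neutral H -> forall N, par H N -> skrel H N.
Proof. intros H Hn; induction Hn; intros N P; inversion P; subst.
 - constructor.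
 - constructor; auto. apply par_betas; auto.
 - inversion Hn. Qed.

Lemma par_hnf_sk : forall H, is_hnf H -> forall N, par H N -> skrel H N.
Proof. intros H Hn; induction Hn; intros N P.
 - eapply par_neutral_sk; eauto.
 - inversion P; subst. constructor; auto. Qed.

Lemma fw1 : forall k M H, hreds k M H -> is_hnf H -> forall N, par M N ->
  exists j H2, j <= k /\ hreds j N H2 /\ is_hnf H2 /\ skrel H H2.
Proof. intros k M H Hr; induction Hr; intros Hh N P.
 - exists 0, N. split; [lia|split; [constructor|split]].
   + eapply par_hnf; eauto.
   + eapply par_hnf_sk; eauto.
 - destruct (par_hred _ _ H _ P) as [N1 [P1 [E|[R _]]]].
   + subst. destruct (IHHr Hh _ P1) as [j [H2 [? [? [? ?]]]]]. exists j, H2; repeat split; auto.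
   + destruct (IHHr Hh _ P1) as [j [H2 [? [? [? ?]]]]]. exists (S j), H2; repeat split; auto; [lia|].
     econstructor; eauto. Qed.

Lemma fw : forall M N, betas M N -> forall k H, hreds k M H -> is_hnf H ->
  exists j H2, j <= k /\ hreds j N H2 /\ is_hnf H2 /\ skrel H H2.
Proof. intros M N B. apply clos_rt_rt1n in B. induction B as [x|x y z Bxy Byz IH]; intros k H Hr Hh.
 - exists k, H; repeat split; auto using skrel_refl.
 - destruct (fw1 _ _ _ Hr Hh _ (beta_par _ _ Bxy)) as [j [H1 [Hj [Hr1 [Hh1 Hs1]]]]].
   destruct (IH _ _ Hr1 Hh1) as [j2 [H5 [Hj2 [Hr2 [Hh2 Hs2]]]]].
   exists j2, H5; repeat split; auto; [lia|]. eapply skrel_trans; eauto. Qed.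

Lemma has_hnf_back : forall M N, betas M N -> has_hnf N -> has_hnf M.
Proof. intros M N B [h [? ?]]. exists h; split; auto. eapply betas_trans; eauto. Qed.

Lemma has_hnf_fwd : forall M N, betas M N -> has_hnf M -> has_hnf N.
Proof. intros M N B [h [Hb Hh]]. destruct (head_norm _ _ Hb Hh) as [k [h1 [Hr Hh1]]].
 destruct (fw _ _ B _ _ Hr Hh1) as [j [H2 [_ [Hr2 [Hh2 _]]]]].
 exists H2; split; auto. eapply hreds_betas; eauto. Qed.

Definition shape (t : term) : label :=
  match t with Var n => LVar n | Lam _ => LLam | App _ _ => LApp end.

Lemma skel_nil : forall h l a, skel_at h [] l a -> l = shape h /\ a = None.
Proof. intros h l a H; inversion H; subst; simpl; auto. Qed.

Lemma skel_nil_ex : forall h, skel_at h [] (shape h) None.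
Proof. destruct h; constructor. Qed.

Lemma skrel_shape : forall a b, skrel a b -> shape a = shape b.
Proof. intros a b H; destruct H; reflexivity. Qed.

Definition Sp (p : position) := forall H H2, skrel H H2 ->
  (forall l1 a1 l2 a2, skel_at H p l1 a1 -> skel_at H2 p l2 a2 -> l1 = l2 /\ ann_ge a1 a2) /\
  (forall l a1, skel_at H p l a1 -> exists a2, skel_at H2 p l a2 /\ ann_ge a1 a2) /\
  (forall l a2, skel_at H2 p l a2 -> exists a1, skel_at H p l a1 /\ ann_ge a1 a2).

Definition Cp (p : position) := forall M N, betas M N ->
    (forall l1 a1 l2 a2, cbt_at M p l1 a1 -> cbt_at N p l2 a2 ->
       l1 = l2 /\ ann_ge a1 a2) /\
    (forall l a1, cbt_at M p l a1 -> exists a2, cbt_at N p l a2 /\ ann_ge a1 a2) /\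
    (forall l a2, cbt_at N p l a2 -> exists a1, cbt_at M p l a1 /\ ann_ge a1 a2).

Lemma S_nil : Sp [].
Proof. intros H H2 Hs. pose proof (skrel_shape _ _ Hs) as E. split; [|split].
 - intros l1 a1 l2 a2 A1 A2. apply skel_nil in A1; apply skel_nil in A2.
   destruct A1, A2; subst. split; [congruence|simpl; auto].
 - intros l a1 A1. apply skel_nil in A1; destruct A1; subst. exists None; split; [rewrite E; apply skel_nil_ex|simpl; auto].
 - intros l a2 A2. apply skel_nil in A2; destruct A2; subst. exists None; split; [rewrite <- E; apply skel_nil_ex|simpl; auto]. Qed.

Lemma S_cons : forall d p, Sp p -> Cp p -> Sp (d :: p).
Proof. intros d p IS IC H H2 Hs. destruct Hs as [n|a b Hab|f g u v Hfg Huv].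
 - split; [|split]; intros; match goal with X : skel_at (Var _) _ _ _ |- _ => inversion X end.
 - destruct (IS _ _ Hab) as [S1 [S2 S3]]. split; [|split].
   + intros l1 a1 l2 a2 A1 A2; inversion A1; inversion A2; subst; eauto.
   + intros l a1 A1; inversion A1; subst. destruct (S2 _ _ H4) as [a2 [? ?]]. exists a2; split; auto. constructor; auto.
   + intros l a2 A2; inversion A2; subst. destruct (S3 _ _ H4) as [a1 [? ?]]. exists a1; split; auto. constructor; auto.
 - destruct (IS _ _ Hfg) as [S1 [S2 S3]]. destruct (IC _ _ Huv) as [C1 [C2 C3]]. split; [|split].
   + intros l1 a1 l2 a2 A1 A2; inversion A1; inversion A2; subst; try discriminate; eauto;
     match goal with E : _ :: _ = _ :: _ |- _ => inversion E end.
   + intros l a1 A1; inversion A1; subst.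
     * destruct (S2 _ _ H5) as [a2 [? ?]]. exists a2; split; auto. constructor; auto.
     * destruct (C2 _ _ H5) as [a2 [? ?]]. exists a2; split; auto. constructor; auto.
   + intros l a2 A2; inversion A2; subst.
     * destruct (S3 _ _ H5) as [a1 [? ?]]. exists a1; split; auto. constructor; auto.
     * destruct (C3 _ _ H5) as [a1 [? ?]]. exists a1; split; auto. constructor; auto.
Qed.

Lemma cbt_nil_inv : forall t l a, cbt_at t [] l a ->
  (~ has_hnf t /\ l = LBot /\ a = None) \/
  (exists k h a0, hreds k t h /\ is_hnf h /\ skel_at h [] l a0 /\ a = Some k).
Proof. intros t l a H; inversion H; subst; [left; auto|right; eauto 10]. Qed.

Lemma cbt_cons_inv : forall t d p l a, cbt_at t (d :: p) l a ->
  exists k h, hreds k t h /\ is_hnf h /\ skel_at h (d :: p) l a.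
Proof. intros t d p l a H; inversion H; subst; eauto. Qed.

Lemma match_hnf : forall M N, betas M N -> forall k1 h1 k2 h2, hreds k1 M h1 -> is_hnf h1 ->
  hreds k2 N h2 -> is_hnf h2 -> k2 <= k1 /\ skrel h1 h2.
Proof. intros M N B k1 h1 k2 h2 R1 H1 R2 H2.
 destruct (fw _ _ B _ _ R1 H1) as [j [H3 [Hj [R3 [Hh3 Hs]]]]].
 destruct (hreds_uniq _ _ _ R3 Hh3 _ _ R2 H2); subst; auto. Qed.

Lemma bwd_hnf : forall M N, betas M N -> forall k2 h2, hreds k2 N h2 -> is_hnf h2 ->
  exists k1 h1, hreds k1 M h1 /\ is_hnf h1.
Proof. intros M N B k2 h2 R2 H2. apply head_norm with h2; auto.
 eapply betas_trans; eauto. eapply hreds_betas; eauto. Qed.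

Lemma C_of_S : forall p, Sp p -> Cp p.
Proof. intros p IS M N B. destruct p as [|d p].
 - split; [|split].
   + intros l1 a1 l2 a2 HM HN.
     destruct (cbt_nil_inv _ _ _ HM) as [[NM [? ?]]|[k1 [h1 [b1 [R1 [Hh1 [S1 ?]]]]]]];
     destruct (cbt_nil_inv _ _ _ HN) as [[NN [? ?]]|[k2 [h2 [b2 [R2 [Hh2 [S2 ?]]]]]]]; subst.
     * split; simpl; auto.
     * exfalso. apply NM. apply has_hnf_back with N; auto. exists h2; split; auto. eapply hreds_betas; eauto.
     * exfalso. apply NN. apply has_hnf_fwd with M; auto. exists h1; split; auto. eapply hreds_betas; eauto.
     * destruct (match_hnf _ _ B _ _ _ _ R1 Hh1 R2 Hh2) as [Hk Hs].
       destruct (IS _ _ Hs) as [T1 _]. destruct (T1 _ _ _ _ S1 S2). split; auto.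
   + intros l a1 HM.
     destruct (cbt_nil_inv _ _ _ HM) as [[NM [? ?]]|[k1 [h1 [b1 [R1 [Hh1 [S1 ?]]]]]]]; subst.
     * exists None; split; [|simpl; auto]. constructor. intro HN. apply NM. eapply has_hnf_back; eauto.
     * destruct (fw _ _ B _ _ R1 Hh1) as [j [h2 [Hj [R2 [Hh2 Hs]]]]].
       destruct (IS _ _ Hs) as [_ [T2 _]]. destruct (T2 _ _ S1) as [a2 [S2 _]].
       exists (Some j); split; [econstructor; eauto|simpl; auto].
   + intros l a2 HN.
     destruct (cbt_nil_inv _ _ _ HN) as [[NN [? ?]]|[k2 [h2 [b2 [R2 [Hh2 [S2 ?]]]]]]]; subst.
     * exists None; split; [|simpl; auto]. constructor. intro HM. apply NN. eapply has_hnf_fwd; eauto.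
     * destruct (bwd_hnf _ _ B _ _ R2 Hh2) as [k1 [h1 [R1 Hh1]]].
       destruct (match_hnf _ _ B _ _ _ _ R1 Hh1 R2 Hh2) as [Hk Hs].
       destruct (IS _ _ Hs) as [_ [_ T3]]. destruct (T3 _ _ S2) as [a1 [S1 _]].
       exists (Some k1); split; [econstructor; eauto|simpl; auto].
 - split; [|split].
   + intros l1 a1 l2 a2 HM HN.
     destruct (cbt_cons_inv _ _ _ _ _ HM) as [k1 [h1 [R1 [Hh1 S1]]]].
     destruct (cbt_cons_inv _ _ _ _ _ HN) as [k2 [h2 [R2 [Hh2 S2]]]].
     destruct (match_hnf _ _ B _ _ _ _ R1 Hh1 R2 Hh2) as [Hk Hs].
     destruct (IS _ _ Hs) as [T1 _]. eauto.
   + intros l a1 HM.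
     destruct (cbt_cons_inv _ _ _ _ _ HM) as [k1 [h1 [R1 [Hh1 S1]]]].
     destruct (fw _ _ B _ _ R1 Hh1) as [j [h2 [Hj [R2 [Hh2 Hs]]]]].
     destruct (IS _ _ Hs) as [_ [T2 _]]. destruct (T2 _ _ S1) as [a2 [S2 Ha]].
     exists a2; split; auto. eapply cbt_sub; eauto.
   + intros l a2 HN.
     destruct (cbt_cons_inv _ _ _ _ _ HN) as [k2 [h2 [R2 [Hh2 S2]]]].
     destruct (bwd_hnf _ _ B _ _ R2 Hh2) as [k1 [h1 [R1 Hh1]]].
     destruct (match_hnf _ _ B _ _ _ _ R1 Hh1 R2 Hh2) as [Hk Hs].
     destruct (IS _ _ Hs) as [_ [_ T3]]. destruct (T3 _ _ S2) as [a1 [S1 Ha]].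
     exists a1; split; auto. eapply cbt_sub; eauto.
Qed.

Lemma S_all : forall p, Sp p.
Proof. induction p; [apply S_nil|]. apply S_cons; auto. apply C_of_S; auto. Qed.

Theorem proposition6p5 : forall M N : term, betas M N ->
  forall p : position,
    (* same Boehm tree (same positions, same labels), clocks of M >= clocks of N *)
    (forall l1 a1 l2 a2, cbt_at M p l1 a1 -> cbt_at N p l2 a2 ->
       l1 = l2 /\ ann_ge a1 a2) /\
    (forall l a1, cbt_at M p l a1 -> exists a2, cbt_at N p l a2 /\ ann_ge a1 a2) /\
    (forall l a2, cbt_at N p l a2 -> exists a1, cbt_at M p l a1 /\ ann_ge a1 a2).
Proof. intros M N B p. exact (C_of_S p (S_all p) M N B). Qed.
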